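(* Fix $0<\tau\le1$, $m>0$ and $\alpha=\frac{\tau}{2\tau+2m}$. There exist $S=S(\alpha)\ge2$ (depending also on $d$) and $\delta_0>0$ such that for every $\delta\in(0,\delta_0)$, with the integer $r$ determined by $2^{-r}\le\delta^S<2^{-r+1}$, the following holds: for every $\omega_1\in\Omega$ and every fixed cube $Q\in\mathcal{D}_1=\mathcal{D}(\omega_1)$, $$\mathbb{P}_{\omega_2}\{Q\text{ is bad}\}\le\delta^2,$$ and symmetrically $\mathbb{P}_{\omega_1}\{R\text{ is bad}\}\le\delta^2$ for every fixed $R\in\mathcal{D}_2=\mathcal{D}(\omega_2)$.
   Context: Fix a unit cube $Q_*\subset\mathbb{R}^d$. $\Omega=(-1/40,1/40]^d$ with normalized Lebesgue measure $\mathbb{P}$. For $\omega\in\Omega$, $\mathcal{D}(\omega)$ is the collection of all dyadic subcubes of $\omega+Q_*$ (obtained by repeated subdivision into $2^d$ children). $\omega_1,\omega_2\in\Omega$ are independent. The skeleton of a cube $R$ is $sk\,R=\bigcup_{i=1}^{2^d}\partial R_i$, $R_i$ the dyadic children of $R$; $\ell(\cdot)$ is side length. A cube $Q\in\mathcal{D}_1$ is bad if there is $R\in\mathcal{D}_2$ with $\ell(R)\ge2^r\ell(Q)$ and $\operatorname{dist}(Q,sk\,R)<\ell(Q)^\alpha\ell(R)^{1-\alpha}$; badness of $R\in\mathcal{D}_2$ is defined symmetrically with respect to $\mathcal{D}_1$. *)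

(* Defs.v *)
From HB Require Import structures.
From mathcomp Require Import all_boot all_order all_algebra.
From mathcomp Require Import all_classical all_reals all_analysis.
Set Implicit Arguments. Unset Strict Implicit. Unset Printing Implicit Defensive.
Import Order.TTheory GRing.Theory Num.Theory.
Local Open Scope classical_set_scope.
Local Open Scope ring_scope.

Section Defs.
Variables (R : realType) (d : nat).

Definition pt := 'I_d -> R.

Definition edist (x y : pt) : R := Num.sqrt (\sum_(i < d) (x i - y i) ^+ 2).

Definition set_dist (A B : set pt) : R :=
  inf [set e | exists x y, A x /\ B y /\ e = edist x y].

Definition cube (c : pt) (l : R) : set pt :=
  [set x | forall i, c i <= x i <= c i + l].

Definition cube_boundary (c : pt) (l : R) : set pt :=
  [set x | cube c l x /\ exists i, x i = c i \/ x i = c i + l].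

Definition child_corner (c : pt) (l : R) (eps : 'I_d -> bool) : pt :=
  fun i => c i + (eps i)%:R * (l / 2).

Definition skeleton (c : pt) (l : R) : set pt :=
  [set x | exists eps : 'I_d -> bool, cube_boundary (child_corner c l eps) (l / 2) x].

(* (c, l) is a cube of the dyadic system D(omega) obtained from omega + Q_*,
   where Q_* is the unit cube with lower corner q *)
Definition dyadic (q omega : pt) (c : pt) (l : R) : Prop :=
  exists (k : nat) (j : 'I_d -> nat),
    (forall i, (j i < 2 ^ k)%N) /\ l = (2 ^+ k)^-1 /\
    forall i, c i = q i + omega i + (j i)%:R * (2 ^+ k)^-1.

Definition bad (q omega : pt) (r : int) (alpha : R) (c : pt) (l : R) : Prop :=
  exists (c' : pt) (l' : R), dyadic q omega c' l' /\
    (2 : R) `^ (r%:~R) * l <= l' /\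
    set_dist (cube c l) (skeleton c' l') < l `^ alpha * l' `^ (1 - alpha).

Definition Omega : set pt := [set w | forall i, - (40%:R)^-1 < w i <= (40%:R)^-1].

Definition box (a b : pt) : set pt := [set x | forall i, a i <= x i <= b i].
Definition box_vol (a b : pt) : R := \prod_(i < d) Num.max (b i - a i) 0.

Definition lebesgue_outer (A : set pt) : \bar R :=
  ereal_inf [set s | exists (a b : nat -> pt),
     A `<=` \bigcup_k box (a k) (b k) /\
     s = (\sum_(0 <= k <oo) (box_vol (a k) (b k))%:E)%E].

(* normalized Lebesgue measure on Omega (|Omega| = 20^-d) *)
Definition Prob (A : set pt) : \bar R :=
  (((20%:R : R) ^+ d)%:E * lebesgue_outer (A `&` Omega))%E.

End Defs.

(* Main.v *)
Require Import Defs.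
From HB Require Import structures.
From mathcomp Require Import all_boot all_order all_algebra.
From mathcomp Require Import all_classical all_reals all_analysis.
From mathcomp Require Import ring lra zify.
From Stdlib Require Import Lia.
Import Order.TTheory GRing.Theory Num.Theory.
Local Open Scope classical_set_scope.
Local Open Scope ring_scope.

Section Aux.
Variable R : realType.

Lemma E2n (n : nat) : (2:R) ^+ n = 2 `^ n%:R.
Proof. by rewrite powR_mulrn. Qed.

Lemma E2nV (n : nat) : ((2:R) ^+ n)^-1 = 2 `^ (- n%:R).
Proof. by rewrite powRN powR_mulrn. Qed.

Lemma E2M (a b : R) : 2 `^ a * 2 `^ b = 2 `^ (a + b).
Proof. by rewrite powRD //; apply/implyP => _; rewrite pnatr_eq0. Qed.

Lemma E2X (a b : R) : (2 `^ a) `^ b = 2 `^ (a * b).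
Proof. by rewrite powRrM. Qed.

Lemma E2le (a b : R) : a <= b -> 2 `^ a <= 2 `^ b.
Proof. by move=> h; apply: ler_powR => //; lra. Qed.

Lemma coord_le_edist d (x y : pt R d) j : `|x j - y j| <= Defs.edist x y.
Proof.
rewrite /Defs.edist -sqrtr_sqr ler_sqrt; last by apply: sumr_ge0 => i _; apply: sqr_ge0.
rewrite (bigD1 j) //=; apply: ler_wpDr => //; apply: sumr_ge0 => i _; apply: sqr_ge0.
Qed.


Definition epsk (alpha : R) (k k' : nat) : R :=
  ((2:R) ^+ k)^-1 `^ alpha * ((2:R) ^+ k')^-1 `^ (1 - alpha).
Definition lo_ d (c q : pt R d) (j : 'I_d) (alpha : R) (k k' : nat) (N : nat) : R :=
  c j - q j - N%:R * ((2:R) ^+ k'.+1)^-1 - epsk alpha k k'.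
Arguments lo_ {d}.
Definition hi_ d (c q : pt R d) (j : 'I_d) (alpha : R) (k k' : nat) (N : nat) : R :=
  lo_ c q j alpha k k' N + ((2:R) ^+ k)^-1 + 2 * epsk alpha k k'.
Arguments hi_ {d}.

Lemma bad_slab d (hd : (0 < d)%N) (q w c : pt R d) k rn alpha :
  bad q w (Posz rn) alpha c (((2:R) ^+ k)^-1) ->
  exists j k' N, (k' + rn <= k)%N /\ (N <= 2 ^ k'.+1)%N /\
    lo_ c q j alpha k k' N <= w j <= hi_ c q j alpha k k' N.
Proof.
move=> [c' [l' [[k' [jv [hjv [-> hc']]]] [hsc hd']]]].
have Kp : (0:R) < 2 ^+ k by apply: exprn_gt0.
have Pp : (0:R) < 2 ^+ k' by apply: exprn_gt0.
have P1 : (0:R) < 2 ^+ k'.+1 by apply: exprn_gt0.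
have hk : (k' + rn <= k)%N.
  have e : ((Posz rn)%:~R : R) = rn%:R by [].
  rewrite e powR_mulrn // in hsc.
  have := ler_wpM2r (x := 2 ^+ k * 2 ^+ k') _ hsc.
  have e1 : (2:R) ^+ rn * (2 ^+ k)^-1 * (2 ^+ k * 2 ^+ k') = 2 ^+ (k' + rn).
    rewrite addnC exprD; field; lra.
  have e2 : ((2:R) ^+ k')^-1 * (2 ^+ k * 2 ^+ k') = 2 ^+ k.
    field; lra.
  rewrite e1 e2 ler_eXn2l ?ltr1n //; apply; apply: mulr_ge0; lra.
set l := ((2:R) ^+ k)^-1.
have l0 : 0 <= l by rewrite /l invr_ge0; lra.
have l'0 : 0 <= ((2:R) ^+ k')^-1 by rewrite invr_ge0; lra.
have ne : [set e | exists x y, cube c l x /\ skeleton c' ((2:R) ^+ k')^-1 y /\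
            e = Defs.edist x y] !=set0.
  exists (Defs.edist c (child_corner c' ((2:R) ^+ k')^-1 (fun _ => false))).
  exists c, (child_corner c' ((2:R) ^+ k')^-1 (fun _ => false)).
  split; first by move=> i; apply/andP; split; lra.
  split=> //; exists (fun _ => false); split.
    by move=> i; apply/andP; split; lra.
  by exists (Ordinal hd); left.
have [e [x [y [hx [[eps [_ [j hyj]]] ->]]]] he] := inf_lt ne hd'.
have hxy := @coord_le_edist d x y j.
have hb : exists b : bool, y j = q j + w j + (2 * jv j + eps j + b)%N%:R * ((2:R) ^+ k'.+1)^-1.
  rewrite /child_corner hc' in hyj.
  have e3 : ((2:R) ^+ k')^-1 = 2 * ((2:R) ^+ k'.+1)^-1 by rewrite exprS; field; lra.
  case: hyj => ->; [exists false | exists true]; rewrite !natrD ?natrM /= e3;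
    case: (eps j) => /=; field; lra.
case: hb => b {}hyj.
exists j, k', (2 * jv j + eps j + b)%N; split => //; split.
  have := hjv j; have := leq_b1 (eps j); have := leq_b1 b; rewrite expnS; lia.
have := hx j; move=> /andP [hx1 hx2].
have : `|x j - y j| < epsk alpha k k' by apply: le_lt_trans he.
rewrite ltr_norml hyj /hi_ /lo_ => /andP [h1 h2].
rewrite -/l; apply/andP; split; lra.
Qed.


Lemma maxr0 (a : R) : 0 <= a -> Num.max a 0 = a.
Proof. by move=> h; rewrite /Num.max ltNge h. Qed.

Definition sa d (j : 'I_d) (lo : R) : pt R d := fun i => if i == j then lo else - (40%:R)^-1.
Definition sb d (j : 'I_d) (hi : R) : pt R d := fun i => if i == j then hi else (40%:R)^-1.
Arguments sa {d}. Arguments sb {d}.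

Lemma slab_vol d (j : 'I_d) (lo hi : R) : lo <= hi ->
  (20%:R : R) ^+ d * box_vol (sa j lo) (sb j hi) = 20%:R * (hi - lo).
Proof.
move=> h; rewrite /box_vol (bigD1 j) //= /sa /sb eqxx.
rewrite maxr0; last by lra.
rewrite (eq_bigr (fun _ => (20%:R : R)^-1)); last first.
  move=> i /negbTE ->; rewrite maxr0; last by lra.
  by field.
rewrite prodr_const cardC1 card_ord.
case: d j => [[]//|d' j] /=.
rewrite exprS exprVn; field.
have : (0:R) < 20%:R ^+ d' by apply: exprn_gt0; lra.
lra.
Qed.


Lemma term_bound (alpha : R) (k i : nat) : 0 < alpha <= 1 -> (i <= k)%N ->
  (20%:R * (((2:R) ^+ k)^-1 + 2 * epsk alpha k (k - i))) *+ (2 ^ (k - i).+1).+1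
  <= 180%:R * ((2:R) `^ (- alpha)) ^+ i.
Proof.
move=> /andP [a0 a1] hik.
set k' := (k - i)%N.
have hk : k = (k' + i)%N by rewrite /k' subnK.
set P := (2:R) ^+ k'.
have P1 : 1 <= P by rewrite /P exprn_ege1 //; lra.
set l := ((2:R) ^+ k)^-1.
have l0 : 0 <= l by rewrite /l invr_ge0 exprn_ge0 //; lra.
set e := epsk alpha k k'.
have e0 : 0 <= e by rewrite /e /epsk mulr_ge0 // powR_ge0.
have hA : P * l = 2 `^ (- i%:R).
  rewrite /P /l E2n E2nV E2M hk natrD; congr (_ `^ _); lra.
have hB : P * e = 2 `^ (- (alpha * i%:R)).
  rewrite /P /e /epsk !E2nV !E2X E2n !E2M hk natrD; congr (_ `^ _); ring.
have hxy : (2:R) `^ (- i%:R) <= 2 `^ (- (alpha * i%:R)).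
  apply: E2le; have : (0:R) <= i%:R by apply: ler0n.
  nra.
have hr : ((2:R) `^ (- alpha)) ^+ i = 2 `^ (- (alpha * i%:R)).
  by rewrite -powR_mulrn ?powR_ge0 // E2X; congr (_ `^ _); ring.
rewrite hr -hB -mulr_natr.
have hn : ((2 ^ k'.+1).+1)%:R = 2 * P + 1 :> R.
  by rewrite -addn1 natrD natrX exprS /P.
rewrite hn.
have : P * l <= P * e by rewrite hA; apply: le_trans hxy _; rewrite -hB.
nra.
Qed.

Lemma geom_bound (rho : R) (a b : nat) : 0 < rho < 1 ->
  \sum_(a <= i < b) rho ^+ i <= rho ^+ a / (1 - rho).
Proof.
move=> /andP [r0 r1].
rewrite ler_pdivlMr; last by lra.
case: (leqP b a) => hab.
  rewrite big_geq // mul0r; apply: exprn_ge0; lra.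
rewrite mulr_suml.
have -> : \sum_(a <= i < b) rho ^+ i * (1 - rho) = - \sum_(a <= i < b) (rho ^+ i.+1 - rho ^+ i).
  rewrite -sumrN; apply: eq_bigr => i _; rewrite exprS; ring.
rewrite telescope_sumr; last by apply: ltnW.
have : 0 <= rho ^+ b by apply: exprn_ge0; lra.
lra.
Qed.


Lemma vol00 d (hd : (0 < d)%N) : box_vol (fun _ : 'I_d => (0:R)) (fun _ => 0) = 0.
Proof. by rewrite /box_vol (bigD1 (Ordinal hd)) //= subrr maxr0 // mul0r. Qed.

Lemma vol_ge0 d (u v : pt R d) : 0 <= box_vol u v.
Proof.
by apply: prodr_ge0 => i _; rewrite /Num.max; case: ifP => // /negbT; rewrite -leNgt.
Qed.

Lemma prob_bad d (hd : (0 < d)%N) (q c : pt R d) (k rn : nat) (alpha : R) :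
  0 < alpha <= 1 ->
  (Prob [set w | bad q w (Posz rn) alpha c (((2:R) ^+ k)^-1)] <=
  (d%:R * 180%:R * (((2:R) `^ (- alpha)) ^+ rn / (1 - (2:R) `^ (- alpha))))%:E)%E.
Proof.
move=> ha.
pose inner := [seq (i, N) | i <- index_iota rn k.+1, N <- index_iota 0 (2 ^ (k - i).+1).+1].
pose idx := [seq (j, p.1, p.2) | j <- enum 'I_d, p <- inner].
pose boxa (x : 'I_d * nat * nat) := sa x.1.1 (lo_ c q x.1.1 alpha k (k - x.1.2) x.2).
pose boxb (x : 'I_d * nat * nat) := sb x.1.1 (hi_ c q x.1.1 alpha k (k - x.1.2) x.2).
pose x0 := (Ordinal hd, 0%N, 0%N).
pose a n := if (n < size idx)%N then boxa (nth x0 idx n) else (fun _ => 0).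
pose b n := if (n < size idx)%N then boxb (nth x0 idx n) else (fun _ => 0).
pose V := \sum_(x <- idx) box_vol (boxa x) (boxb x).
have hV : (lebesgue_outer ([set w | bad q w (Posz rn) alpha c (((2:R) ^+ k)^-1)] `&` @Omega R d)
            <= V%:E)%E.
  apply: ge_ereal_inf; exists (\sum_(0 <= n <oo) (box_vol (a n) (b n))%:E)%E.
    exists a, b; split => //.
    move=> w [hbad hOm].
    have [j [k' [N [hk [hN hint]]]]] := @bad_slab d hd q w c k rn alpha hbad.
    have k'k : (k' <= k)%N by lia.
    pose x := (j, (k - k')%N, N).
    have xin : x \in idx.
      rewrite /idx.
      have := @allpairs_f_dep _ (fun=> _) _ (fun j (p : nat * nat) => (j, p.1, p.2))
        (enum 'I_d) (fun=> inner) j ((k - k')%N, N).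
      apply; first by rewrite mem_enum.
      have := @allpairs_f_dep _ (fun=> _) _ (fun i N => (i, N))
        (index_iota rn k.+1) (fun i => index_iota 0 (2 ^ (k - i).+1).+1) (k - k')%N N.
      apply; first by rewrite mem_index_iota; lia.
      by rewrite mem_index_iota subKn //; lia.
    exists (index x idx) => //.
    rewrite /a /b index_mem xin nth_index // => i.
    rewrite /boxa /boxb /sa /sb /= subKn //.
    case: eqP => [->|_] //.
    by have := hOm i => /andP [h1 h2]; apply/andP; split; lra.
  rewrite (nneseries_split 0 (size idx)); last by move=> n _; rewrite lee_fin vol_ge0.
  rewrite eseries0; last first.
    by move=> n hn _; rewrite /a /b ltnNge hn /= vol00.
  rewrite adde0 add0n sumEFin lee_fin /V (big_nth x0).
  rewrite le_eqVlt; apply/orP; left; apply/eqP.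
  by apply: eq_big_nat => n /andP [_ hn]; rewrite /a /b hn.
have hS : (20%:R : R) ^+ d * V <=
    d%:R * 180%:R * (((2:R) `^ (- alpha)) ^+ rn / (1 - (2:R) `^ (- alpha))).
  pose F (i : nat) := 20%:R * (((2:R) ^+ k)^-1 + 2 * epsk alpha k (k - i)).
  have e1 : (20%:R : R) ^+ d * V = \sum_(x <- idx) F x.1.2.
    rewrite /V mulr_sumr; apply: eq_bigr => x _.
    rewrite slab_vol /hi_ /F; first ring.
    have : 0 <= epsk alpha k (k - x.1.2) by rewrite /epsk mulr_ge0 // powR_ge0.
    have : (0:R) <= ((2:R) ^+ k)^-1 by rewrite invr_ge0 exprn_ge0 //; lra.
    lra.
  have rho0 : 0 < (2:R) `^ (- alpha) by apply: powR_gt0; lra.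
  have rho1 : (2:R) `^ (- alpha) < 1.
    rewrite powRN invf_lt1; last by apply: powR_gt0; lra.
    have := @gt0_ltr_powR R alpha _ 1 2; rewrite powR1; apply => //; first by case/andP: ha.
    - by rewrite nnegrE ler01.
    - by rewrite nnegrE; lra.
    - lra.
  rewrite e1 /idx big_allpairs_dep /=.
  apply: (@le_trans _ _ (\sum_(j <- enum 'I_d) (180%:R * (((2:R) `^ (- alpha)) ^+ rn / (1 - (2:R) `^ (- alpha)))))).
    apply: ler_sum => j _.
    rewrite /inner big_allpairs_dep /=.
    apply: le_trans (_ : \sum_(rn <= i < k.+1) 180%:R * ((2:R) `^ (- alpha)) ^+ i <= _).
      apply: ler_sum_nat => i /andP [_ hi].
      rewrite sumr_const_nat subn0; apply: term_bound => //.
    rewrite -mulr_sumr; apply: ler_wpM2l; first by apply: ler0n.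
    by apply: geom_bound; apply/andP.
  rewrite big_const_seq count_predT size_enum_ord iter_addr_0 -mulr_natl.
  by rewrite le_eqVlt; apply/orP; left; apply/eqP; ring.
rewrite /Prob; apply: le_trans (lee_wpmul2l _ hV) _.
  by rewrite lee_fin; apply: exprn_ge0; apply: ler0n.
by rewrite -EFinM lee_fin.
Qed.


Lemma rho_bounds (alpha : R) : 0 < alpha -> 0 < (2:R) `^ (- alpha) < 1.
Proof.
move=> a0; apply/andP; split; first by apply: powR_gt0; lra.
rewrite powRN invf_lt1; last by apply: powR_gt0; lra.
have := @gt0_ltr_powR R alpha a0 1 2; rewrite powR1; apply.
- by rewrite nnegrE ler01.
- by rewrite nnegrE; lra.
- lra.
Qed.

End Aux.

Theorem theorem15 (R : realType) (d : nat) (q : pt R d) (tau m : R) :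
  (0 < d)%N -> 0 < tau <= 1 -> 0 < m ->
  let alpha := tau / (2 * tau + 2 * m) in
  exists S : R, 2 <= S /\
  exists delta0 : R, 0 < delta0 /\
  forall delta : R, 0 < delta < delta0 ->
  forall r : int,
    (2 : R) `^ (- r%:~R) <= delta `^ S < (2 : R) `^ (- r%:~R + 1) ->
    (forall (omega1 : pt R d), Omega omega1 ->
       forall (c : pt R d) (l : R), dyadic q omega1 c l ->
       (Prob [set omega2 | bad q omega2 r alpha c l] <= (delta ^+ 2)%:E)%E) /\
    (forall (omega2 : pt R d), Omega omega2 ->
       forall (c : pt R d) (l : R), dyadic q omega2 c l ->
       (Prob [set omega1 | bad q omega1 r alpha c l] <= (delta ^+ 2)%:E)%E).
Proof.
move=> hd /andP [t0 t1] m0 alpha.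
have a0 : 0 < alpha by rewrite /alpha divr_gt0 //; lra.
have a1 : alpha <= 1 by rewrite /alpha ler_pdivrMr; lra.
have aa : 0 < alpha <= 1 by apply/andP.
have /andP [rho0 rho1] := @rho_bounds R alpha a0.
set rho := (2:R) `^ (- alpha) in rho0 rho1 *.
set C := d%:R * 180%:R / (1 - rho).
have C0 : 0 <= C by apply: divr_ge0; [apply: mulr_ge0; apply: ler0n | lra].
exists (3 / alpha); split; first by rewrite ler_pdivlMr //; lra.
exists (C + 1)^-1; split; first by rewrite invr_gt0; lra.
move=> delta /andP [dl0 dlt] r /andP [hr1 hr2].
have dC : delta * (C + 1) < 1 by rewrite -ltr_pdivlMr ?div1r //; lra.
have eC : delta * (C + 1) = delta * C + delta by ring.
have dC0 : 0 <= delta * C by apply: mulr_ge0; lra.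
have dl1 : delta < 1 by lra.
have S0 : 0 < 3 / alpha by rewrite divr_gt0 //; lra.
have dS1 : delta `^ (3 / alpha) < 1.
  have := @gt0_ltr_powR R (3 / alpha) S0 delta 1; rewrite powR1; apply.
  - by rewrite nnegrE; lra.
  - by rewrite nnegrE ler01.
  - lra.
case: r hr1 hr2 => [rn|n] hr1 hr2; last first.
  exfalso.
  have e : ((Negz n)%:~R : R) = - n.+1%:R by rewrite NegzE mulrNz.
  rewrite e opprK -E2n in hr1.
  have : (1:R) <= 2 ^+ n.+1 by rewrite exprn_ege1 //; lra.
  lra.
have e : ((Posz rn)%:~R : R) = rn%:R by [].
rewrite e in hr1.
have hrho : rho ^+ rn <= delta ^+ 3.
  have e1 : rho ^+ rn = (2 `^ (- rn%:R)) `^ alpha.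
    by rewrite /rho -powR_mulrn ?powR_ge0 // E2X E2X; congr (_ `^ _); ring.
  rewrite e1.
  apply: le_trans (_ : (delta `^ (3 / alpha)) `^ alpha <= _).
    apply: (@ge0_ler_powR R alpha (ltW a0)) => //; rewrite nnegrE powR_ge0 //.
  rewrite -powRrM (_ : 3 / alpha * alpha = 3%:R); last by field; lra.
  by rewrite powR_mulrn //; lra.
have key : d%:R * 180%:R * (rho ^+ rn / (1 - rho)) <= delta ^+ 2.
  have -> : d%:R * 180%:R * (rho ^+ rn / (1 - rho)) = C * rho ^+ rn.
    by rewrite /C; field; lra.
  apply: le_trans (_ : C * delta ^+ 3 <= _); first by apply: ler_wpM2l.
  have : 0 <= delta ^+ 2 by apply: exprn_ge0; lra.
  rewrite (_ : C * delta ^+ 3 = (delta * C) * delta ^+ 2); last by ring.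
  move=> h2; rewrite -[X in _ <= X]mul1r; apply: ler_wpM2r => //; lra.
split.
- move=> w _ c l [k [jv [_ [-> _]]]].
  apply: le_trans (@prob_bad R d hd q c k rn alpha aa) _; by rewrite lee_fin.
- move=> w _ c l [k [jv [_ [-> _]]]].
  apply: le_trans (@prob_bad R d hd q c k rn alpha aa) _; by rewrite lee_fin.
Qed.
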